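(* Let $\mathcal D$ be a finite domain. (i) The law of $\sigma_r$ under $\mu_{\mathcal D}$ is $\nu_{\mathcal D}(\sigma_r)=\frac1{Z_{\mathcal D}}2^{k(\theta(\sigma_r))}$ for $\sigma_r\in\{+,-\}^{F(\mathcal D)}$, where $Z_{\mathcal D}$ is a normalising constant. (ii) Conditionally on $\sigma_r$, the law of $\sigma_b$ under $\mu_{\mathcal D}$ is obtained by assigning to each connected component of $\theta(\sigma_r)$ a spin in $\{+,-\}$ uniformly and independently, and giving all faces of that component this blue spin.
   Context: $\mathbb H$ is the hexagonal lattice and $\mathbb T$ the dual triangular lattice (vertices = faces of $\mathbb H$). A domain is a subgraph $\mathcal D$ of $\mathbb H$ without isolated vertices for which there exists a self-avoiding polygon $\partial_E\mathcal D$ such that $E(\mathcal D)$ is the set of edges in the bounded component of $\mathbb H\setminus\partial_E\mathcal D$; $F(\mathcal D)$ is the set of faces adjacent to an edge of $\mathcal D$, and $\mathcal D^*$ is the subgraph of $\mathbb T$ induced by $F(\mathcal D)$. A pair $(\sigma_r,\sigma_b)\in\{+,-\}^{F(\mathcal D)}\times\{+,-\}^{F(\mathcal D)}$ is coherent if for all adjacent faces $u,v\in F(\mathcal D)$, $\sigma_r(u)=\sigma_r(v)$ or $\sigma_b(u)=\sigma_b(v)$; $\mu_{\mathcal D}$ is uniform on coherent pairs and $\nu_{\mathcal D}$ is the law of $\sigma_r$. For $\sigma\in\{+,-\}^{F(\mathcal D)}$, $\theta(\sigma)$ is the spanning subgraph of $\mathcal D^*$ with edge set $\{uv\in E(\mathcal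 D^* ):\sigma(u)\ne\sigma(v)\}$, and $k(\theta(\sigma))$ is its number of connected components (isolated vertices counted). *)

(* Defs.v *)
From HB Require Import structures.
From mathcomp Require Import all_boot all_order all_algebra finmap.
Set Implicit Arguments. Unset Strict Implicit. Unset Printing Implicit Defensive.
Import Order.TTheory GRing.Theory Num.Theory.
Local Open Scope ring_scope.


Definition Tadj (u v : int * int) : bool :=
  let d := (v.1 - u.1, v.2 - u.2) in
  [|| d == (1, 0), d == (-1, 0), d == (0, 1), d == (0, -1),
      d == (1, -1) | d == (-1, 1)].

(* (x,y,false) : up-triangle {(x,y),(x+1,y),(x,y+1)},
   (x,y,true)  : down-triangle {(x+1,y),(x,y+1),(x+1,y+1)} *)
Definition Hvert := (int * int * bool)%type.

Definition tri (a : Hvert) : seq (int * int) :=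
  let: (x, y, b) := a in
  if b then [:: (x + 1, y); (x, y + 1); (x + 1, y + 1)]
  else [:: (x, y); (x + 1, y); (x, y + 1)].

Definition Hadj (a b : Hvert) : bool :=
  (a != b) && (count (mem (tri b)) (tri a) == 2%N).

(* faces of H adjacent to the edge ab of H: the two endpoints of the dual T-edge *)
Definition face_of_edge (a b : Hvert) (f : int * int) : bool :=
  (f \in tri a) && (f \in tri b).

Definition sa_polygon (p : seq Hvert) : bool :=
  [&& uniq p, (3 <= size p)%N & cycle Hadj p].

Definition poly_edges (p : seq Hvert) : seq (Hvert * Hvert) := zip p (rot 1 p).

Definition on_poly (p : seq Hvert) (a b : Hvert) : bool :=
  ((a, b) \in poly_edges p) || ((b, a) \in poly_edges p).

Definition crossed (p : seq Hvert) (u v : int * int) : bool :=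
  has (fun e => face_of_edge e.1 e.2 u && face_of_edge e.1 e.2 v) (poly_edges p).

Definition Tstep (p : seq Hvert) (u v : int * int) : bool :=
  Tadj u v && ~~ crossed p u v.

(* face x lies in the bounded component of R^2 \ p : the set of faces
   reachable from x without crossing p is bounded (finite) *)
Definition inside (p : seq Hvert) (x : int * int) : Prop :=
  exists N : nat, forall s, path (Tstep p) x s ->
    forall y, y \in s -> ((`|y.1| <= N)%N && (`|y.2| <= N)%N).

(* ab is an edge of the domain D bounded by p : an edge of H, not on p,
   lying in the bounded component (its adjacent faces are inside) *)
Definition D_edge (p : seq Hvert) (a b : Hvert) : Prop :=
  [/\ Hadj a b, ~~ on_poly p a b &
      forall f, face_of_edge a b f -> inside p f].

Definition D_face (p : seq Hvert) (f : int * int) : Prop :=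
  exists a b, D_edge p a b /\ face_of_edge a b f.

(* ---------- spins on F(D) (true = +, false = -) ---------- *)
Section Spins.
Variable F : {fset (int * int)}.

Definition spin := {ffun F -> bool}.

Definition coherent (sr sb : spin) : bool :=
  [forall u : F, forall v : F,
     Tadj (val u) (val v) ==> (sr u == sr v) || (sb u == sb v)].

Definition coh_pairs : {set spin * spin} :=
  [set x : spin * spin | coherent x.1 x.2].

Definition muD (sr sb : spin) : rat :=
  if coherent sr sb then (#|coh_pairs|%:R)^-1 else 0.

Definition nuD (sr : spin) : rat := \sum_(sb : spin) muD sr sb.

Definition theta (s : spin) : rel F :=
  fun u v => Tadj (val u) (val v) && (s u != s v).

(* k(theta(sigma)) : number of connected components (isolated vertices counted) *)
Definition kcomp (s : spin) : nat := n_comp (theta s) (@predT F).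

Definition comp_const (sr sb : spin) : bool :=
  [forall u : F, forall v : F, connect (theta sr) u v ==> (sb u == sb v)].
End Spins.

(* Main.v *)
Require Import Defs.
From HB Require Import structures.
From mathcomp Require Import all_boot all_order all_algebra finmap.
Import Order.TTheory GRing.Theory Num.Theory.
Local Open Scope ring_scope.

Section Aux.
Variable F : {fset (int * int)}.

Lemma Tadj_sym u v : Tadj u v = Tadj v u.
Proof.
rewrite /Tadj /=.
have E : (u.1 - v.1, u.2 - v.2) = (- (v.1 - u.1), - (v.2 - u.2)) by rewrite !opprB.
rewrite E; set a := v.1 - u.1; set b := v.2 - u.2.
have Hp : forall (x y : int), ((- a, - b) == (x, y)) = ((a, b) == (- x, - y)).
  move=> x y; rewrite !xpair_eqE -(inj_eq (@oppr_inj _)) opprK.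
  by rewrite -[(- b == y)](inj_eq (@oppr_inj _)) opprK.
by rewrite !Hp !oppr0 !opprK; do !case: (_ == _).
Qed.

Lemma theta_sym (s : spin F) : connect_sym (theta s).
Proof.
apply: sym_connect_sym => u v; rewrite /theta Tadj_sym eq_sym //.
Qed.

Lemma coherent_const (sr sb : spin F) : coherent sr sb = comp_const sr sb.
Proof.
apply/idP/idP.
- move/forallP=> H; apply/forallP=> u; apply/forallP=> v; apply/implyP.
  move/connectP=> [s pth ->] {v}.
  elim: s u pth => [|w s IH] u //= /andP[huw pth].
  rewrite -(eqP (IH w pth)).
  move: huw; rewrite /theta => /andP[ha hne].
  move: (forallP (H u) w); rewrite ha /= => /orP[/eqP e|//].
  by rewrite e eqxx in hne.
- move/forallP=> H; apply/forallP=> u; apply/forallP=> v; apply/implyP=> ha.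
  case: (boolP (sr u == sr v)) => //= hne.
  apply: (implyP (forallP (H u) v)); apply: connect1; by rewrite /theta ha.
Qed.

Lemma card_const (sr : spin F) :
  #|[set sb : spin F | comp_const sr sb]| = (2 ^ kcomp sr)%N.
Proof.
set e := theta sr.
have se := theta_sym sr.
pose S := {x : F | roots e x}.
pose phi (g : {ffun S -> bool}) : spin F :=
  [ffun x => g (exist _ (fingraph.root e x) (roots_root se x))].
have rr : forall x : F, roots e x -> fingraph.root e x = x by move=> x /eqP.
have phiinj : injective phi.
  move=> g1 g2 Heq; apply/ffunP => -[x hx].
  have := congr1 (fun f : spin F => f x) Heq; rewrite /phi !ffunE.
  have -> : exist _ (fingraph.root e x) (roots_root se x) = exist (roots e) x hx.
    by apply: val_inj; rewrite /= rr.
  by [].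
have -> : [set sb : spin F | comp_const sr sb] = [set phi g | g in {ffun S -> bool}].
  apply/setP => sb; rewrite inE; apply/idP/idP.
  - move/forallP=> H; apply/imsetP; exists [ffun y : S => sb (val y)] => //.
    apply/ffunP=> x; rewrite /phi !ffunE /=.
    by move: (implyP (forallP (H x) (fingraph.root e x)) (connect_root e x)) => /eqP.
  - case/imsetP=> g _ ->; apply/forallP=> u; apply/forallP=> v; apply/implyP.
    rewrite -(root_connect se) => /eqP Hr; rewrite /phi !ffunE.
    by apply/eqP; congr (g _); apply: val_inj; rewrite /= Hr.
rewrite card_imset // card_ffun card_bool card_sig /kcomp /n_comp_mem.
by congr (2 ^ _)%N; apply: eq_card => x; rewrite !inE andbT.
Qed.

End Aux.

Theorem proposition2p7 (p : seq Hvert) (hp : sa_polygon p)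
  (F : {fset (int * int)}) (hF : forall f, f \in F <-> D_face p f) :
  (exists Z : rat, 0 < Z /\
     forall sr : spin F, nuD sr = (2%:R ^+ kcomp sr) / Z) /\
  (forall sr sb : spin F,
     muD sr sb / nuD sr =
       (if comp_const sr sb then (2%:R ^+ kcomp sr)^-1 else 0)).
Proof.
set N := #|coh_pairs F|.
have Npos : (0 < N)%N.
  apply/card_gt0P; exists ([ffun=> true], [ffun=> true]).
  by rewrite inE; apply/forallP=> u; apply/forallP=> v; rewrite !ffunE eqxx /= implybT.
have Nr : (N%:R : rat) != 0 by rewrite pnatr_eq0 -lt0n.
have nuE : forall sr : spin F, nuD sr = (2%:R ^+ kcomp sr) / N%:R.
  move=> sr; rewrite /nuD /muD -big_mkcond /=.
  rewrite (eq_bigl (fun sb => sb \in [set sb : spin F | comp_const sr sb])); last first.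
    by move=> sb; rewrite inE coherent_const.
  rewrite big_const iter_addr addr0 card_const.
  by rewrite -natrX mulr_natl.
split.
  exists N%:R; split; last exact: nuE.
  by rewrite ltr0n.
move=> sr sb; rewrite nuE /muD coherent_const.
case: ifP => _; last by rewrite mul0r.
by rewrite invfM invrK mulrCA mulVf // mulr1.
Qed.
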